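(* Let $\tilde{\mathbf{G}}$ and $\tilde{\mathbf{G}}_0$ be two degree $n$ covers of the same quasisplit reductive group $\mathbf{G}$ over $S$ (with fixed Borel subgroup and maximally split maximal torus $\mathbf{B}\supset\mathbf{T}$), with first Brylinski–Deligne invariants $Q$ and $Q_0$ on the cocharacter lattice $\mathcal{Y}$. If $Q(y)-Q_0(y)\in n\mathbb{Z}$ for all $y\in\mathcal{Y}$, then the modified dual root data coincide, $\tilde\Psi^\vee=\tilde\Psi_0^\vee$ (in particular $\mathcal{Y}_{Q,n}=\mathcal{Y}_{Q_0,n}$, $\mathcal{X}_{Q,n}=\mathcal{X}_{Q_0,n}$, and the modified roots and coroots agree), and hence the dual groups are equal: $\tilde G^\vee=\tilde G_0^\vee$.
   Context: $S$ is $\operatorname{Spec}$ of a field or of a DVR (containing a field or with finite residue field). Let $\mathcal{X},\mathcal{Y}$ be the character and cocharacter lattices of $\mathbf{T}$ (local systems on $S_{\mathrm{et}}$), $\Phi,\Phi^\vee$ roots and coroots, $\Delta,\Delta^\vee$ simple roots/coroots for $\mathbf{B}$. For a Weyl-invariant quadratic form $Q:\mathcal{Y}\to\mathbb{Z}$ set $\beta_Q(y_1,y_2)=n^{-1}(Q(y_1+y_2)-Q(y_1)-Q(y_2))$, $\mathcal{Y}_{Q,n}=\{y\in\mathcal{Y}:\beta_Q(y,y')\in\mathbb{Z}\ \forall y'\}$, $\mathcal{X}_{Q,n}=\{x\in n^{-1}\mathcal{X}:\langle x,y\rangle\in\mathbb{Z}\ \forall y\in\mathcal{Y}_{Q,n}\}$.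 For $\phi\in\Phi$ put $n_\phi=n/\gcd(n,Q(\phi^\vee))$, $\tilde\phi=n_\phi^{-1}\phi$, $\tilde\phi^\vee=n_\phi\phi^\vee$, giving sets $\tilde\Phi,\tilde\Phi^\vee,\tilde\Delta,\tilde\Delta^\vee$. The modified dual root datum is $\tilde\Psi^\vee=(\mathcal{Y}_{Q,n},\tilde\Phi^\vee,\tilde\Delta^\vee,\mathcal{X}_{Q,n},\tilde\Phi,\tilde\Delta)$, and the dual group $\tilde G^\vee$ of the cover is the local system on $S_{\mathrm{et}}$ of pinned reductive groups over $\mathbb{Z}$ with this based root datum (character lattice $\mathcal{Y}_{Q,n}$, roots $\tilde\Phi^\vee$). *)

(* Defs.v *)
From HB Require Import structures.
From mathcomp Require Import all_boot all_order all_algebra.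
Set Implicit Arguments. Unset Strict Implicit. Unset Printing Implicit Defensive.
Import Order.TTheory GRing.Theory Num.Theory.
Local Open Scope ring_scope.

(* Cocharacter lattice Y = Z^r ('rV[int]_r), character lattice X = Z^r,
   with the perfect pairing <x,y> = sum_i x_i y_i.  Elements of n^{-1}X are
   modelled inside 'rV[rat]_r. *)
Definition pairZ (r : nat) (x y : 'rV[int]_r) : int := \sum_(i < r) x 0 i * y 0 i.
Definition pairQ (r : nat) (x : 'rV[rat]_r) (y : 'rV[int]_r) : rat :=
  \sum_(i < r) x 0 i * (y 0 i)%:~R.
Definition toQ (r : nat) (x : 'rV[int]_r) : 'rV[rat]_r := map_mx (fun k : int => k%:~R) x.

Definition is_root_datum (r : nat) (rts : seq ('rV[int]_r * 'rV[int]_r)) : Prop :=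
  uniq rts /\
  forall a, a \in rts ->
    pairZ a.1 a.2 = 2 /\
    forall b, b \in rts ->
      (b.1 - pairZ b.1 a.2 *: a.1, b.2 - pairZ a.1 b.2 *: a.2) \in rts.

Definition is_base (r : nat) (rts simple : seq ('rV[int]_r * 'rV[int]_r)) : Prop :=
  uniq simple /\ {subset simple <= rts} /\
  (forall c : 'I_(size simple) -> int,
      \sum_(i < size simple) c i *: (nth (0, 0) simple i).1 = 0 -> forall i, c i = 0) /\
  (forall a, a \in rts -> exists c : 'I_(size simple) -> int,
      a.1 = \sum_(i < size simple) c i *: (nth (0, 0) simple i).1 /\
      ((forall i, 0 <= c i) \/ (forall i, c i <= 0))).

Definition betaQ (r n : nat) (Q : 'rV[int]_r -> int) (y1 y2 : 'rV[int]_r) : rat :=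
  (Q (y1 + y2) - Q y1 - Q y2)%:~R / n%:R.

Definition is_quadratic_form (r : nat) (Q : 'rV[int]_r -> int) : Prop :=
  (forall (k : int) y, Q (k *: y) = k ^+ 2 * Q y) /\
  (forall y1 y2 y3, Q (y1 + y2 + y3) - Q (y1 + y2) - Q y3
       = (Q (y1 + y3) - Q y1 - Q y3) + (Q (y2 + y3) - Q y2 - Q y3)).

Definition weyl_invariant (r : nat) (rts : seq ('rV[int]_r * 'rV[int]_r))
    (Q : 'rV[int]_r -> int) : Prop :=
  forall a, a \in rts -> forall y, Q (y - pairZ a.1 y *: a.2) = Q y.

Definition YQn (r n : nat) (Q : 'rV[int]_r -> int) (y : 'rV[int]_r) : Prop :=
  forall y', betaQ n Q y y' \is a Num.int.

Definition XQn (r n : nat) (Q : 'rV[int]_r -> int) (x : 'rV[rat]_r) : Prop :=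
  (exists x0 : 'rV[int]_r, x = (n%:R)^-1 *: toQ x0) /\
  forall y, YQn n Q y -> pairQ x y \is a Num.int.

Definition nphi (r n : nat) (Q : 'rV[int]_r -> int) (a : 'rV[int]_r * 'rV[int]_r) : nat :=
  n %/ gcdn n `|Q a.2|%N.

Definition mod_root (r n : nat) (Q : 'rV[int]_r -> int) (a : 'rV[int]_r * 'rV[int]_r)
  : 'rV[rat]_r := ((nphi n Q a)%:R)^-1 *: toQ a.1.
Definition mod_coroot (r n : nat) (Q : 'rV[int]_r -> int) (a : 'rV[int]_r * 'rV[int]_r)
  : 'rV[int]_r := (nphi n Q a)%:Z *: a.2.

(* the modified dual based root datum
   (Y_{Q,n}, ~Phi^vee, ~Delta^vee, X_{Q,n}, ~Phi, ~Delta) *)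
Record based_datum (r : nat) := BasedDatum {
  bd_X : 'rV[int]_r -> Prop;
  bd_roots : seq 'rV[int]_r;
  bd_simple_roots : seq 'rV[int]_r;
  bd_Y : 'rV[rat]_r -> Prop;
  bd_coroots : seq 'rV[rat]_r;
  bd_simple_coroots : seq 'rV[rat]_r }.

Definition modified_dual (r n : nat) (Q : 'rV[int]_r -> int)
    (rts simple : seq ('rV[int]_r * 'rV[int]_r)) : based_datum r :=
  BasedDatum (YQn n Q) (map (mod_coroot n Q) rts) (map (mod_coroot n Q) simple)
             (XQn n Q) (map (mod_root n Q) rts) (map (mod_root n Q) simple).

(* Main.v *)
Require Import Defs.
From mathcomp Require Import all_boot all_order all_algebra.
From mathcomp Require Import ring.
From Stdlib Require Import FunctionalExtensionality PropExtensionality.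
Import GRing.Theory Num.Theory.
Local Open Scope ring_scope.

Lemma beta_shift (r n : nat) (Q Q0 : 'rV[int]_r -> int) :
  (0 < n)%N -> (forall y, (n%:Z %| Q y - Q0 y)%Z) ->
  forall y y', betaQ n Q y y' = betaQ n Q0 y y' +
     (((Q (y + y') - Q0 (y + y')) %/ n%:Z)%Z - ((Q y - Q0 y) %/ n%:Z)%Z
       - ((Q y' - Q0 y') %/ n%:Z)%Z)%:~R.
Proof.
move=> n0 H y y'; rewrite /betaQ.
have hn : (n%:R : rat) != 0 by rewrite pnatr_eq0 -lt0n.
have E : forall v, (Q v)%:~R = (Q0 v)%:~R + (((Q v - Q0 v) %/ n%:Z)%Z)%:~R * (n%:R : rat).
  move=> v; have := divzK (H v) => /(congr1 (fun k : int => (k%:~R : rat))).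
  rewrite intrM -pmulrn => ->; rewrite intrB; ring.
rewrite !intrD !intrN !E.
set a := (((Q (y + y') - _) %/ _)%Z)%:~R; set b := (((Q y - _) %/ _)%Z)%:~R.
set c := (((Q y' - _) %/ _)%Z)%:~R.
by field.
Qed.

Theorem mainTheorem3 (r n : nat) (rts simple : seq ('rV[int]_r * 'rV[int]_r))
    (Q Q0 : 'rV[int]_r -> int) :
  (0 < n)%N ->
  is_root_datum rts -> is_base rts simple ->
  is_quadratic_form Q -> weyl_invariant rts Q ->
  is_quadratic_form Q0 -> weyl_invariant rts Q0 ->
  (forall y, (n%:Z %| Q y - Q0 y)%Z) ->
  modified_dual n Q rts simple = modified_dual n Q0 rts simple.
Proof.
move=> n0 _ _ _ _ _ _ H.
have EY : YQn n Q = YQn n Q0.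
  apply: functional_extensionality => y; apply: propositional_extensionality.
  rewrite /YQn; split=> h y'; have := h y'; rewrite (@beta_shift r n Q Q0 n0 H).
    by rewrite rpredDr // intr_int.
  by move=> ?; rewrite rpredDr // intr_int.
have EX : XQn n Q = XQn n Q0 by rewrite /XQn EY.
have En : nphi n Q = nphi n Q0.
  apply: functional_extensionality => a; rewrite /nphi; congr (_ %/ _)%N.
  have := divzK (H a.2) => e.
  have : gcdz n%:Z (Q a.2) = gcdz n%:Z (Q0 a.2).
    by rewrite -(subrK (Q0 a.2) (Q a.2)) -e gcdzMDl.
  by rewrite /gcdz => -[].
by rewrite /modified_dual /mod_coroot /mod_root EY EX En.
Qed.
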